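(* Let $X$ be a finite metric space whose similarity matrix $Z_X$ is invertible. Then the space of lines to $X$, $\mathcal{L}(X)$, contains a dense open subset each of whose elements $(Y_{f,t})_{0<t\le1}$ satisfies $\lim_{t\to0}|Y_{f,t}|=|X|$.
   Context: For a finite metric space $(X,d)$, the similarity matrix $Z_X$ has entries $Z_X(x,y)=e^{-d(x,y)}$. A weighting is $\mathbf{w}\in\mathbb{R}^X$ with $Z_X\mathbf{w}=(1,\dots,1)^\top$; if one exists, the magnitude $|X|$ is the sum of its entries (independent of choice). For finite metric spaces $(X,d_X)$, $(Y,d_Y)$ and a surjection $f\colon Y\to X$, the line from $Y$ to $X$ along $f$ is the family $(Y_{f,t})_{0<t\le1}$, $Y_{f,t}=(Y,d_{f,t})$ with $d_{f,t}(y,y')=t\,d_Y(y,y')+(1-t)\,d_X(f(y),f(y'))$. The set $\mathcal{L}(X)$ of lines to $X$ consists of all such lines modulo: $(Y_{f,t})\sim(Y_{g,t})$ if there are isometries $h\colon Y\to Y$, $k\colon X\to X$ with $k\circ f=g\circ h$. Topology: label $X=\{x_1,\dots,x_m\}$. Let $\mathrm{Met}_n\subset\mathbb{R}^{n\times n}$ be the set of distance matrices of ordered $n$-point metric spaces, with the Euclidean topology. A line along $f\colon Y\to X$, $\#Y=n$, with $r_i=\#f^{-1}(x_i)$ and $f^{-1}(x_i)=\{y_i^1,\dots,y_i^{r_i}\}$, is represented by the distance matrix of $Y$ in the ordering $(y_1^1,\dots,y_1^{r_1},\dots,y_m^1,\dots,y_m^{r_m})$, in the component indexed by $(r_1,\dots,r_m)$.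 This induces a bijection of $\mathcal{L}(X)$ with $\big(\bigsqcup_{(r_1,\dots,r_m),\,r_i\ge1,\,n=\sum r_i}\mathrm{Met}_n/(\mathfrak{S}_{r_1}\times\cdots\times\mathfrak{S}_{r_m})\big)/\mathrm{Iso}(X)$, where $\mathfrak{S}_{r_i}$ permutes rows and columns simultaneously within the $i$-th block and $\mathrm{Iso}(X)\subseteq\mathfrak{S}_m$ permutes the blocks. $\mathcal{L}(X)$ is given the topology transported via this bijection from the quotient topology (Euclidean topology on each $\mathrm{Met}_n$, then quotient by the finite groups, then quotient by $\mathrm{Iso}(X)$). *)

(* Defs.v *)
From HB Require Import structures.
From mathcomp Require Import all_boot all_order all_algebra.
From mathcomp Require Import all_classical all_reals all_analysis.
Set Implicit Arguments. Unset Strict Implicit. Unset Printing Implicit Defensive.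
Import Order.TTheory GRing.Theory Num.Theory.
Local Open Scope ring_scope.
Local Open Scope classical_set_scope.

Section Magnitude.
Variable R : realType.

Definition is_metric (n : nat) (d : 'I_n -> 'I_n -> R) : Prop :=
  [/\ (forall x y, 0 <= d x y),
      (forall x y, d x y = 0 <-> x = y),
      (forall x y, d x y = d y x) &
      (forall x y z, d x z <= d x y + d y z)].

Definition simZ (n : nat) (d : 'I_n -> 'I_n -> R) : 'M[R]_n :=
  \matrix_(i, j) expR (- d i j).

Definition is_weighting (n : nat) (Z : 'M[R]_n) (w : 'cV[R]_n) : Prop :=
  Z *m w = const_mx 1.

Definition has_weighting (n : nat) (Z : 'M[R]_n) : Prop :=
  exists w, is_weighting Z w.

(* magnitude: sum of the entries of a (chosen) weighting, if one exists;
   (junk value 0 otherwise -- only used where a weighting exists) *)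
Definition magnitude (n : nat) (Z : 'M[R]_n) : R :=
  match pselect (has_weighting Z) with
  | left h => \sum_i (projT1 (cid h)) i ord0
  | right _ => 0
  end.

End Magnitude.

Section Lines.
Variables (R : realType) (m : nat) (dX : 'I_m -> 'I_m -> R).

(* A representative of a point of L(X): n = #Y, the block map f : Y -> X
   (Y = 'I_n in the ordering (y_1^1,...,y_1^{r_1},...,y_m^1,...,y_m^{r_m}),
   so f is nondecreasing and surjective, and r_i = #f^{-1}(x_i) >= 1),
   and the distance matrix D of Y in that ordering. *)
Record line_rep := LineRep {
  lr_n : nat;
  lr_f : 'I_lr_n -> 'I_m;
  lr_D : 'I_lr_n -> 'I_lr_n -> R }.
Arguments lr_f : clear implicits.
Arguments lr_D : clear implicits.

Definition block_map (n : nat) (f : 'I_n -> 'I_m) : Prop :=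
  (forall y y' : 'I_n, (y <= y')%N -> (f y <= f y')%N) /\
  (forall x : 'I_m, exists y, f y = x).

(* the points of the disjoint union of the Met_n over all components *)
Definition valid_rep (p : line_rep) : Prop :=
  block_map (lr_f p) /\ is_metric (lr_D p).

Definition line_dist (p : line_rep) (t : R) : 'I_(lr_n p) -> 'I_(lr_n p) -> R :=
  fun y y' => t * lr_D p y y' + (1 - t) * dX (lr_f p y) (lr_f p y').

Arguments line_dist : clear implicits.

Definition isometry_X (k : 'I_m -> 'I_m) : Prop :=
  bijective k /\ (forall x x', dX (k x) (k x') = dX x x').

(* On the
   ordered representatives this is exactly the quotient by the block
   permutations S_{r_1} x ... x S_{r_m} followed by the quotient by Iso(X). *)
Definition line_equiv (p q : line_rep) : Prop :=
  exists (h : 'I_(lr_n p) -> 'I_(lr_n q)) (k : 'I_m -> 'I_m),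
    [/\ bijective h, isometry_X k,
        (forall y, lr_f q (h y) = k (lr_f p y)) &
        (forall y y', lr_D q (h y) (h y') = lr_D p y y')].

(* subsets of L(X) correspond to saturated subsets of the disjoint union *)
Definition saturated (S : line_rep -> Prop) : Prop :=
  forall p q, valid_rep p -> valid_rep q -> line_equiv p q -> S p -> S q.

(* openness in the disjoint union of the Met_n (Euclidean topology on each
   Met_n, i.e. subspace topology from R^{n x n}); the quotient topology on
   L(X) declares a subset open iff its (saturated) preimage is open. *)
Definition open_rep (S : line_rep -> Prop) : Prop :=
  forall n (f : 'I_n -> 'I_m) (D : 'I_n -> 'I_n -> R),
    block_map f -> is_metric D -> S (LineRep f D) ->
    exists2 e : R, 0 < e &
      forall D' : 'I_n -> 'I_n -> R, is_metric D' ->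
        (forall i j, `|D' i j - D i j| < e) -> S (LineRep f D').

(* density in the quotient topology: every nonempty open subset of L(X)
   (= nonempty open saturated subset of the disjoint union) meets S *)
Definition dense_rep (S : line_rep -> Prop) : Prop :=
  forall W : line_rep -> Prop, saturated W -> open_rep W ->
    (exists p, valid_rep p /\ W p) ->
    exists p, [/\ valid_rep p, W p & S p].

Definition line_mag_limit (p : line_rep) : Prop :=
  (\forall t \near at_right (0:R), has_weighting (simZ (line_dist p t))) /\
  (magnitude (simZ (line_dist p t)) @[t --> at_right (0:R)] --> (magnitude (simZ dX) : R^o)).

End Lines.

(* Main.v *)
Require Import Defs.
From HB Require Import structures.
From mathcomp Require Import all_boot all_order all_algebra.
From mathcomp Require Import all_classical all_reals all_analysis.
From mathcomp Require Import ring lra.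
Import Order.TTheory GRing.Theory Num.Theory.
Local Open Scope ring_scope.
Local Open Scope classical_set_scope.
Set Implicit Arguments. Unset Strict Implicit. Unset Printing Implicit Defensive.


Section Generic.
Variable R : realType.

Lemma cvg_det {T : Type} {F : set_system T} {FF : Filter F} {k} {M : T -> 'M[R]_k} {L : 'M[R]_k} :
  (forall i j, (fun x => M x i j) @ F --> (L i j : R^o)) ->
  (fun x => \det (M x)) @ F --> (\det L : R^o).
Proof.
move=> HM.
rewrite /determinant.
apply: (@cvg_big R^o _ +%R 0 xpredT add_continuous) => s _.
apply: cvgMl_tmp.
apply: (@cvg_big R^o _ *%R 1 xpredT mul_continuous) => i _.
exact: HM.
Qed.

Lemma expR_dq (a b : R) : (fun t : R => (expR (a + t * b) - expR a) / t) @ 0^' --> (b * expR a : R^o).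
Proof.
have dif : differentiable (@expR R) (a : R^o) by apply/derivable1_diffP/derivable_expR.
have d : derivable (@expR R) (a : R^o) b by exact: diff_derivable.
have -> : b * expR a = 'D_b (@expR R) a.
  rewrite deriveE // deriv1E; last exact: derivable_expR.
  by rewrite derive1E derive_val.
move: d; rewrite /derivable /derive => d.
apply: cvg_trans _ d; apply: near_eq_cvg; near=> t.
rewrite /= -![_ *: _]/(_ * _) mulrC (addrC a). done.
Unshelve. all: by end_near.
Qed.

Lemma dnbhs_to_right (h : R -> R) (l : R) : h @ 0^' --> (l : R^o) -> h @ 0^'+ --> (l : R^o).
Proof.
move=> H U /H; rewrite !near_simpl /= !near_withinE.
by apply: filterS => t Ht /gt_eqF/negbT; exact: Ht.
Qed.

Lemma cvg_invmx {T : Type} {F : set_system T} {FF : Filter F} {k} {M : T -> 'M[R]_k} {L : 'M[R]_k} :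
  (forall i j, (fun x => M x i j) @ F --> (L i j : R^o)) -> \det L != 0 ->
  forall i j, (fun x => invmx (M x) i j) @ F --> (invmx L i j : R^o).
Proof.
move=> HM dL i j.
have Hd : (fun x => \det (M x)) @ F --> (\det L : R^o) by apply: cvg_det.
have nz : \forall x \near F, \det (M x) != 0 by exact: (cvgr_neq0 (\det L : R^o) Hd dL).
have -> : invmx L i j = (\det L)^-1 * cofactor L j i.
  by rewrite /invmx unitmxE unitfE dL !mxE.
apply: cvg_trans (near_eq_cvg (f := fun x => (\det (M x))^-1 * cofactor (M x) j i) _) _.
  near=> x; rewrite /invmx unitmxE unitfE.
  have -> : \det (M x) != 0 by near: x.
  by rewrite !mxE.
apply: cvgM; first exact: cvgV.
rewrite /cofactor; apply: cvgMl_tmp.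
apply: cvg_det => a b; rewrite !mxE.
by under eq_cvg do rewrite !mxE; exact: HM.
Unshelve. all: by end_near.
Qed.

Lemma weighting_unique n (Z : 'M[R]_n) w : Z \in unitmx -> is_weighting Z w ->
  w = invmx Z *m (const_mx 1 : 'cV[R]_n).
Proof. by move=> U Hw; rewrite -Hw mulKmx. Qed.

Lemma mag_unit n (Z : 'M[R]_n) : Z \in unitmx ->
  has_weighting Z /\ magnitude Z = \sum_i (invmx Z *m (const_mx 1 : 'cV[R]_n)) i 0.
Proof.
move=> U.
have hw : has_weighting Z.
  by exists (invmx Z *m (const_mx 1 : 'cV[R]_n)); rewrite /is_weighting mulmxA mulmxV // mul1mx.
split => //.
rewrite /magnitude; case: pselect => [h|//].
by rewrite -(weighting_unique U (projT2 (cid h))).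
Qed.

Lemma wsum_sym n (Z : 'M[R]_n) w w' : (forall i j, Z i j = Z j i) ->
  is_weighting Z w -> is_weighting Z w' -> \sum_i w i 0 = \sum_i w' i 0.
Proof.
move=> sym Hw Hw'.
have E1 : forall i, w i 0 = \sum_j w' j 0 * Z j i * w i 0.
  move=> i; have := congr1 (fun (M : 'M[R]_(n, 1)) => M i 0) Hw'; rewrite !mxE => H.
  rewrite -mulr_suml; under eq_bigr do rewrite mulrC sym.
  by rewrite H mul1r.
under eq_bigr do rewrite E1.
rewrite exchange_big /=; apply: eq_bigr => j _.
under eq_bigr do rewrite -mulrA.
rewrite -mulr_sumr.
have := congr1 (fun (M : 'M[R]_(n, 1)) => M j 0) Hw; rewrite !mxE => ->.
by rewrite mulr1.
Qed.

Lemma wt_pull n1 n2 (Z1 : 'M[R]_n1) (Z2 : 'M[R]_n2) (k : 'I_n1 -> 'I_n2) :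
  bijective k -> (forall y y', Z1 y y' = Z2 (k y) (k y')) -> forall w2, is_weighting Z2 w2 ->
  is_weighting Z1 (\col_y w2 (k y) 0) /\ \sum_y (\col_y w2 (k y) 0) y 0 = \sum_z w2 z 0.
Proof.
move=> bk HZ w2 Hw2.
have bk' : {on [pred i | true], bijective k} by apply: onW_bij.
split; last first.
  by rewrite (reindex k bk'); apply: eq_bigr => y _; rewrite mxE.
apply/matrixP => y j; rewrite !mxE.
have := congr1 (fun (M : 'M[R]_(n2, 1)) => M (k y) j) Hw2; rewrite !mxE => <-.
rewrite (reindex k bk'); apply: eq_bigr => y' _; rewrite HZ mxE.
by rewrite (ord1 j).
Qed.

Lemma mag_transfer n1 n2 (Z1 : 'M[R]_n1) (Z2 : 'M[R]_n2) (k : 'I_n1 -> 'I_n2) :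
  bijective k -> (forall y y', Z1 y y' = Z2 (k y) (k y')) -> (forall i j, Z2 i j = Z2 j i) ->
  (has_weighting Z1 <-> has_weighting Z2) /\ magnitude Z1 = magnitude Z2.
Proof.
move=> bk HZ sym2.
have [k' kK k'K] := bk.
have bk' : bijective k' by exists k.
have HZ' : forall z z', Z2 z z' = Z1 (k' z) (k' z') by move=> z z'; rewrite HZ !k'K.
have sym1 : forall i j, Z1 i j = Z1 j i by move=> i j; rewrite !HZ sym2.
have h21 : has_weighting Z2 -> has_weighting Z1.
  by move=> [w2 Hw2]; exists (\col_y w2 (k y) 0); case: (wt_pull bk HZ Hw2).
have h12 : has_weighting Z1 -> has_weighting Z2.
  by move=> [w1 Hw1]; exists (\col_y w1 (k' y) 0); case: (wt_pull bk' HZ' Hw1).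
split; first by split.
rewrite /magnitude; case: pselect => [h1|n1']; case: pselect => [h2|n2'] //.
- set w1 := projT1 (cid h1); set w2 := projT1 (cid h2).
  have Hw1 : is_weighting Z1 w1 := projT2 (cid h1).
  have Hw2 : is_weighting Z2 w2 := projT2 (cid h2).
  have [P1 P2] := wt_pull bk HZ Hw2.
  by rewrite (wsum_sym sym1 Hw1 P1) P2.
- by exfalso; apply: n2'; apply: h12.
- by exfalso; apply: n1'; apply: h21.
Qed.

End Generic.


Section Lines.
Variables (R : realType) (m : nat) (dX : 'I_m -> 'I_m -> R).

Lemma lin_cvg (a b : R) : (fun t : R => a + t * b) @ 0^' --> (a : R^o).
Proof.
have h0 : (fun t : R => t) @ 0^' --> (0 : R^o).
  by apply: cvg_within_filter; exact: cvg_id.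
rewrite -[X in _ --> X](addr0 a) -[X in _ --> a + X](mul0r b).
apply: cvgD; first exact: cvg_cst.
exact: cvgMr_tmp h0.
Qed.

Lemma expR_lin_cvg (a b : R) : (fun t : R => expR (a + t * b)) @ 0^' --> (expR a : R^o).
Proof.
exact: (cvg_comp _ _ (@lin_cvg a b) (@continuous_expR R a)).
Qed.

Variables (n : nat) (f : 'I_n -> 'I_m) (g : 'I_m -> 'I_n).
Hypothesis fg : forall b, f (g b) = b.
Implicit Types (D : 'I_n -> 'I_n -> R) (t : R).

Definition Z0 (x y : 'I_n) : R := expR (- dX (f x) (f y)).
Definition Zt (D : 'I_n -> 'I_n -> R) (t : R) (x y : 'I_n) : R :=
  expR (- (t * D x y + (1 - t) * dX (f x) (f y))).
Definition Minf (D : 'I_n -> 'I_n -> R) : 'M[R]_n := \matrix_(x, y)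
  if g (f y) == y then Z0 x y
  else Z0 x y * (dX (f x) (f y) - D x y) - Z0 x (g (f y)) * (dX (f x) (f (g (f y))) - D x (g (f y))).
Definition Mt (D : 'I_n -> 'I_n -> R) (t : R) : 'M[R]_n := \matrix_(x, y)
  if g (f y) == y then Zt D t x y else (Zt D t x y - Zt D t x (g (f y))) / t.
Definition Tt (t : R) : 'M[R]_n := \matrix_(z, y)
  if g (f y) == y then (z == y)%:R else ((z == y)%:R - (z == g (f y))%:R) / t.

Lemma simZ_Zt D t : simZ (line_dist dX (p := LineRep f D) t) = \matrix_(x, y) Zt D t x y.
Proof. by apply/matrixP => x y; rewrite !mxE. Qed.

Lemma sum_delta (a : 'I_n -> R) y : \sum_z a z * (z == y)%:R = a y.
Proof.
under eq_bigr do rewrite mulr_natr mulrb.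
by rewrite -big_mkcond big_pred1_eq.
Qed.

Lemma ZtT D t : (\matrix_(x, y) Zt D t x y) *m Tt t = Mt D t.
Proof.
apply/matrixP => x y; rewrite !mxE.
under eq_bigr do rewrite !mxE.
case: ifP => Fy; first by rewrite (sum_delta (fun z => Zt D t x z)).
under eq_bigr do rewrite mulrA mulrBr.
by rewrite -mulr_suml sumrB (sum_delta (fun z => Zt D t x z)) (sum_delta (fun z => Zt D t x z)).
Qed.

Lemma Zt_lin D t x y : Zt D t x y = expR (- dX (f x) (f y) + t * (dX (f x) (f y) - D x y)).
Proof. by rewrite /Zt; congr expR; ring. Qed.

Lemma Mt_cvg D x y : (fun t => Mt D t x y) @ 0^' --> (Minf D x y : R^o).
Proof.
have [Fy|Fy] := boolP (g (f y) == y).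
  have -> : (fun t => Mt D t x y) = (fun t => expR (- dX (f x) (f y) + t * (dX (f x) (f y) - D x y))).
    by apply/funext => t; rewrite mxE Fy Zt_lin.
  have -> : Minf D x y = expR (- dX (f x) (f y)) by rewrite mxE Fy.
  exact: expR_lin_cvg.
have E : f (g (f y)) = f y by rewrite fg.
set a := - dX (f x) (f y).
have -> : (fun t => Mt D t x y) = (fun t => (expR (a + t * (dX (f x) (f y) - D x y)) - expR a) / t
    - (expR (a + t * (dX (f x) (f y) - D x (g (f y)))) - expR a) / t).
  apply/funext => t; rewrite mxE (negbTE Fy) !Zt_lin E -mulrBl; congr (_ * _); rewrite /a; ring.
have -> : Minf D x y = (dX (f x) (f y) - D x y) * expR a - (dX (f x) (f y) - D x (g (f y))) * expR a.
  by rewrite mxE (negbTE Fy) /Z0 E /a; ring.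
apply: cvgB; exact: expR_dq.
Qed.

Lemma near_dnbhs_right (P : R -> Prop) : (\forall t \near 0^', P t) -> \forall t \near 0^'+, P t.
Proof.
rewrite !near_withinE; apply: filterS => t Pt /= t0.
by apply: Pt; rewrite /= gt_eqF.
Qed.

Lemma sumF (h : 'I_n -> R) : \sum_y (if g (f y) == y then h y else 0) = \sum_b h (g b).
Proof.
rewrite -big_mkcond (reindex_onto g f (P := fun y => g (f y) == y)) /=; last by move=> i /eqP.
by apply: eq_bigl => j; rewrite !fg !eqxx.
Qed.

Lemma colsum_Tt t y : \sum_i Tt t i y = if g (f y) == y then 1 else 0.
Proof.
under eq_bigr do rewrite mxE.
have sd1 : forall y' : 'I_n, \sum_z (z == y')%:R = 1 :> R.
  by move=> y'; rewrite -[RHS](sum_delta (fun _ => 1) y'); apply: eq_bigr => z _; rewrite mul1r.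
case: ifP => Fy; first exact: sd1.
by rewrite -mulr_suml sumrB !sd1 subrr mul0r.
Qed.

Lemma mag_near D t : t != 0 -> \det (Mt D t) != 0 ->
  has_weighting (simZ (line_dist dX (p := LineRep f D) t)) /\
  magnitude (simZ (line_dist dX (p := LineRep f D) t)) =
    \sum_y (if g (f y) == y then (invmx (Mt D t) *m (const_mx 1 : 'cV[R]_n)) y 0 else 0).
Proof.
move=> t0 dM.
rewrite simZ_Zt; set Z := \matrix_(x, y) Zt D t x y.
have UM : Mt D t \in unitmx by rewrite unitmxE unitfE.
have UZ : Z \in unitmx.
  rewrite unitmxE unitfE; apply: contraNneq dM => dZ.
  by rewrite -ZtT det_mulmx -/Z dZ mul0r.
have [hw ->] := mag_unit UZ; split => //.
set v := invmx (Mt D t) *m (const_mx 1 : 'cV[R]_n).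
have -> : invmx Z *m (const_mx 1 : 'cV[R]_n) = Tt t *m v.
  apply/esym/weighting_unique => //.
  by rewrite /is_weighting mulmxA ZtT /v mulmxA mulmxV // mul1mx.
under eq_bigr do rewrite mxE.
rewrite exchange_big /=; apply: eq_bigr => y _.
under eq_bigr do rewrite mulrC.
by rewrite -mulr_sumr colsum_Tt; case: ifP; rewrite ?mulr1 ?mulr0.
Qed.

Lemma limit_value D : simZ dX \in unitmx -> \det (Minf D) != 0 ->
  \sum_y (if g (f y) == y then (invmx (Minf D) *m (const_mx 1 : 'cV[R]_n)) y 0 else 0) = magnitude (simZ dX).
Proof.
move=> UX dM.
have UM : Minf D \in unitmx by rewrite unitmxE unitfE.
have [_ ->] := mag_unit UX.
set wX := invmx (simZ dX) *m (const_mx 1 : 'cV[R]_m).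
have HwX : simZ dX *m wX = const_mx 1 by rewrite /wX mulmxA mulmxV // mul1mx.
set u := \col_y (if g (f y) == y then wX (f y) 0 else 0) : 'cV[R]_n.
have <- : u = invmx (Minf D) *m (const_mx 1 : 'cV[R]_n).
  apply: weighting_unique => //; apply/matrixP => x j.
  rewrite mxE [RHS]mxE.
  have := congr1 (fun (M : 'M[R]_(m, 1)) => M (f x) j) HwX; rewrite [RHS]mxE => <-.
  rewrite mxE.
  transitivity (\sum_y (if g (f y) == y then simZ dX (f x) (f y) * wX (f y) 0 else 0)).
    apply: eq_bigr => y _; rewrite [u y j]mxE; case: ifP => Fy; last by rewrite mulr0.
    by rewrite [Minf D x y]mxE Fy /Z0 [simZ dX _ _]mxE.
  by rewrite sumF; apply: eq_bigr => b _; rewrite fg (ord1 j).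
rewrite sumF; apply: eq_bigr => b _; rewrite mxE fg !eqxx.
done.
Qed.

Lemma limit_of_det D : simZ dX \in unitmx -> \det (Minf D) != 0 ->
  line_mag_limit dX (LineRep f D).
Proof.
move=> UX dM.
have Hdet : (fun t => \det (Mt D t)) @ 0^' --> (\det (Minf D) : R^o).
  by apply: cvg_det => i j; exact: Mt_cvg.
have nz : \forall t \near 0^', \det (Mt D t) != 0.
  exact: (cvgr_neq0 (\det (Minf D) : R^o) Hdet dM).
have t0 : \forall t \near 0^', t != 0 :> R.
  by rewrite near_withinE; apply: nearW.
have EM : \forall t \near 0^', has_weighting (simZ (line_dist dX (p := LineRep f D) t)) /\
  magnitude (simZ (line_dist dX (p := LineRep f D) t)) =
    \sum_y (if g (f y) == y then (invmx (Mt D t) *m (const_mx 1 : 'cV[R]_n)) y 0 else 0).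
  by near=> t; apply: mag_near; [near: t; exact: t0 | near: t; exact: nz].
split.
  apply: near_dnbhs_right; by apply: filterS EM => t [].
apply: dnbhs_to_right.
apply: (cvg_trans (near_eq_cvg (f := fun t => \sum_y (if g (f y) == y then (invmx (Mt D t) *m (const_mx 1 : 'cV[R]_n)) y 0 else 0))
   (g := fun t => magnitude (simZ (line_dist dX (p := LineRep f D) t))) _)).
  by apply: filterS EM => t [_ E]; rewrite E.
rewrite -(limit_value UX dM).
apply: (@cvg_big R^o _ +%R 0 xpredT add_continuous) => y _.
case: ifP => _; last exact: cvg_cst.
under eq_cvg do rewrite mxE.
rewrite mxE.
apply: (@cvg_big R^o _ +%R 0 xpredT add_continuous) => z _.
apply: cvgMr_tmp.
by apply: cvg_invmx => // i j; exact: Mt_cvg.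
Unshelve. all: by end_near.
Qed.

End Lines.


Section Open.
Variables (R : realType) (m : nat) (dX : 'I_m -> 'I_m -> R).
Variables (n : nat) (f : 'I_n -> 'I_m) (g : 'I_m -> 'I_n).
Implicit Types (D : 'I_n -> 'I_n -> R) (t : R).

Lemma det_open D : \det (Minf dX f g D) != 0 ->
  exists2 e : R, 0 < e & forall D', (forall i j, `|D' i j - D i j| < e) -> \det (Minf dX f g D') != 0.
Proof.
move=> dM.
pose B (e : R) := [set D' : 'I_n -> 'I_n -> R | forall i j, `|D' i j - D i j| < e].
pose F := filter_from [set e : R | 0 < e] B.
have FF : Filter F.
  apply: filter_from_filter; first by exists (1 : R); rewrite /= ltr01.
  move=> a b a0 b0; exists (Num.min a b); first by rewrite /= lt_min a0 b0.
  by move=> D' HD'; split => i j; have := HD' i j; rewrite lt_min => /andP[].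
have Hent : forall i j, (fun D' : 'I_n -> 'I_n -> R => D' i j) @ F --> (D i j : R^o).
  move=> i j U /nbhs_ballP [e e0 sub]; exists e => // D' HD'; apply: sub.
  by rewrite /ball /= distrC; exact: HD'.
have HM : forall x y, (fun D' => Minf dX f g D' x y) @ F --> (Minf dX f g D x y : R^o).
  move=> x y.
  have [Fy|Fy] := boolP (g (f y) == y).
    have -> : (fun D' => Minf dX f g D' x y) = (fun _ => Z0 dX f x y).
      by apply/funext => D'; rewrite mxE Fy.
    have -> : Minf dX f g D x y = Z0 dX f x y by rewrite mxE Fy.
    exact: (@cvg_cst R^o (Z0 dX f x y) _ F FF).
  have -> : (fun D' => Minf dX f g D' x y) = (fun D' : 'I_n -> 'I_n -> R =>
      Z0 dX f x y * (dX (f x) (f y) - D' x y) - Z0 dX f x (g (f y)) * (dX (f x) (f (g (f y))) - D' x (g (f y)))).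
    by apply/funext => D'; rewrite mxE (negbTE Fy).
  rewrite mxE (negbTE Fy).
  apply: cvgB; apply: cvgMl_tmp; apply: cvgB; by [exact: (@cvg_cst R^o _ _ F FF)|exact: Hent].
have Hdet : (fun D' => \det (Minf dX f g D')) @ F --> (\det (Minf dX f g D) : R^o).
  by apply: cvg_det.
have [e e0 He] := cvgr_neq0 (\det (Minf dX f g D) : R^o) Hdet dM.
by exists e => // D' HD'; apply: He.
Qed.

End Open.


Section Dense.
Variables (R : realType) (m : nat) (dX : 'I_m -> 'I_m -> R).
Variables (n : nat) (f : 'I_n -> 'I_m) (g : 'I_m -> 'I_n).
Hypothesis fg : forall b, f (g b) = b.
Hypothesis dX0 : forall b, dX b b = 0.
Hypothesis UX : simZ dX \in unitmx.
Variable D : 'I_n -> 'I_n -> R.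

Definition Emx (x y : 'I_n) : R := (x != y)%:R.
Definition Dp (s : R) := fun x y => D x y + s * Emx x y.
Definition Bm : 'M[R]_n := \matrix_(x, y) if g (f y) == y then 0
  else Z0 dX f x (g (f y)) * Emx x (g (f y)) - Z0 dX f x y * Emx x y.
Definition Nu (u : R) : 'M[R]_n := \matrix_(x, y) if g (f y) == y then Minf dX f g D x y
  else u * Minf dX f g D x y + Bm x y.

Lemma sum_delta_cond (P : pred 'I_n) y : \sum_(x | P x) (x == y)%:R = (P y)%:R :> R.
Proof.
rewrite big_mkcond /= (bigD1 y) //= eqxx big1 ?addr0; first by case: (P y).
by move=> x /negbTE ->; case: (P x).
Qed.

Lemma N0E x y : Nu 0 x y = if g (f y) == y then Z0 dX f x y else (x == y)%:R - (x == g (f y))%:R.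
Proof.
rewrite !mxE; have [Fy|Fy] := boolP (g (f y) == y); rewrite ?Fy ?(negbTE Fy) //.
rewrite mul0r add0r /Emx /Z0 fg.
have [->|xy] := eqVneq x y.
  rewrite eq_sym (negbTE Fy) /= dX0 oppr0 expR0; ring.
have [xg|xg] := eqVneq x (g (f y)).
  rewrite xg fg /= dX0 oppr0 expR0; ring.
rewrite /=; ring.
Qed.

Lemma N0_det : \det (Nu 0) != 0.
Proof.
rewrite -det_tr; apply/negP => /det0P [v vnz Hv].
move/eqP: vnz; apply.
have eqx : forall x, \sum_y v 0 y * (if g (f y) == y then Z0 dX f x y else (x == y)%:R - (x == g (f y))%:R) = 0.
  move=> x; have := congr1 (fun M : 'M[R]_(1, n) => M 0 x) Hv.
  rewrite [X in X = _ -> _]mxE [X in _ = X -> _]mxE => H.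
  by apply: etrans H; apply: eq_bigr => y _; rewrite [(_^T) _ _]mxE N0E.
pose r (b : 'I_m) := \sum_(x | f x == b) (1 : R).
have rpos : forall b, 0 < r b.
  move=> b; rewrite /r (bigD1 (g b)) ?fg //=.
  have : 0 <= \sum_(i | (f i == b) && (i != g b)) (1 : R) by apply: sumr_ge0 => i _; exact: ler01.
  lra.
have step1 : forall b, \sum_c simZ dX b c * v 0 (g c) = 0.
  move=> b.
  have S0 : \sum_(x | f x == b) \sum_y v 0 y * (if g (f y) == y then Z0 dX f x y else (x == y)%:R - (x == g (f y))%:R) = 0.
    by apply: big1 => x _; exact: eqx.
  rewrite exchange_big /= in S0.
  have key : forall y, \sum_(x | f x == b) v 0 y * (if g (f y) == y then Z0 dX f x y else (x == y)%:R - (x == g (f y))%:R)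
      = r b * (if g (f y) == y then v 0 y * simZ dX b (f y) else 0).
    move=> y; rewrite -mulr_sumr.
    have [Fy|Fy] := boolP (g (f y) == y).
      rewrite /r mulr_suml mulr_sumr; apply: eq_bigr => x /eqP fx.
      by rewrite /Z0 fx mxE; ring.
    rewrite sumrB !sum_delta_cond fg subrr; ring.
  have : r b * \sum_y (if g (f y) == y then v 0 y * simZ dX b (f y) else 0) = 0.
    by rewrite mulr_sumr; apply: etrans S0; apply: eq_bigr => y _; rewrite key.
  move/eqP; rewrite mulf_eq0 (gt_eqF (rpos b)) /= sumF // => /eqP H.
  by apply: etrans H; apply: eq_bigr => c _; rewrite fg mulrC.
have step2 : forall c, v 0 (g c) = 0.
  pose u := \col_c v 0 (g c) : 'cV[R]_m.
  have Zu : simZ dX *m u = 0.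
    apply/matrixP => b j; rewrite [LHS]mxE [RHS]mxE; apply: etrans (step1 b).
    by apply: eq_bigr => c _; rewrite [u _ _]mxE.
  have u0 : u = 0 by rewrite -(mulKmx UX u) Zu mulmx0.
  by move=> c; have := congr1 (fun M : 'M[R]_(m, 1) => M c 0) u0; rewrite !mxE.
apply/matrixP => i j; rewrite (ord1 i) [RHS]mxE.
have [Fj|Fj] := boolP (g (f j) == j); first by rewrite -(eqP Fj) step2.
rewrite -(eqx j) -[LHS](sum_delta (fun y => v 0 y) j).
apply: eq_bigr => y _.
have [Fy|Fy] := boolP (g (f y) == y); first by rewrite -(eqP Fy) step2 !mul0r.
have -> : (j == g (f y)) = false.
  apply/negbTE; apply: contraNneq Fj => ->; by rewrite fg.
by rewrite subr0 eq_sym.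
Qed.

Lemma Minf_lin s : Minf dX f g (Dp s) = Minf dX f g D + s *: Bm.
Proof.
apply/matrixP => x y; rewrite !mxE /Dp.
have [Fy|Fy] := boolP (g (f y) == y); rewrite ?Fy ?(negbTE Fy); first by rewrite mulr0 addr0.
ring.
Qed.

Definition Npoly : {poly R} := \det (map_mx polyC (Minf dX f g D) + 'X *: map_mx polyC Bm).

Lemma Npoly_eval s : Npoly.[s] = \det (Minf dX f g D + s *: Bm).
Proof.
rewrite -horner_evalE -det_map_mx; congr (\det _); apply/matrixP => x y.
by rewrite !mxE /= horner_evalE !hornerE.
Qed.

Lemma exists_good : exists s, \det (Minf dX f g D + s *: Bm) != 0.
Proof.
have HN : forall x y, (fun u => Nu u x y) @ 0^' --> (Nu 0 x y : R^o).
  move=> x y.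
  have [Fy|Fy] := boolP (g (f y) == y).
    have -> : (fun u => Nu u x y) = (fun _ => Minf dX f g D x y).
      by apply/funext => u; rewrite mxE Fy.
    have -> : Nu 0 x y = Minf dX f g D x y by rewrite mxE Fy.
    exact: (@cvg_cst R^o _ _ _ _).
  have -> : (fun u => Nu u x y) = (fun u => Bm x y + u * Minf dX f g D x y).
    by apply/funext => u; rewrite mxE (negbTE Fy) addrC.
  have -> : Nu 0 x y = Bm x y by rewrite mxE (negbTE Fy) mul0r add0r.
  exact: lin_cvg.
have Hd : (fun u => \det (Nu u)) @ 0^' --> (\det (Nu 0) : R^o) by apply: cvg_det.
have nz := cvgr_neq0 (\det (Nu 0) : R^o) Hd N0_det.
have H1 : \forall u \near (0:R)^'+, 0 < u by exact: nbhs_right_gt.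
have H2 : \forall u \near (0:R)^'+, \det (Nu u) != 0 by apply: near_dnbhs_right; exact: nz.
have [u [u0 du]] := filter_ex (filterI H1 H2).
exists u^-1.
have -> : Minf dX f g D + u^-1 *: Bm = Nu u *m diag_mx (\row_y (if g (f y) == y then 1 else u^-1)).
  rewrite mul_mx_diag; apply/matrixP => x y; rewrite [LHS]mxE [RHS]mxE.
  rewrite !mxE.
  have [Fy|Fy] := boolP (g (f y) == y); rewrite ?Fy ?(negbTE Fy); first by rewrite mulr0 addr0 mulr1.
  by field; rewrite gt_eqF.
rewrite det_mulmx det_diag mulf_neq0 //; apply/prodf_neq0 => y _; rewrite mxE.
by case: ifP => _; rewrite ?oner_neq0 // invr_neq0 // gt_eqF.
Qed.

Lemma exists_small e : 0 < e -> exists2 s, 0 < s < e & \det (Minf dX f g (Dp s)) != 0.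
Proof.
move=> e0.
have [s0 Hs0] := exists_good.
have P0 : Npoly != 0.
  by apply: contraNneq Hs0 => P0; rewrite -Npoly_eval P0 horner0.
pose rs := [seq e / (k.+2)%:R | k <- iota 0 (size Npoly)].
have : ~~ all (root Npoly) rs.
  apply/negP => Hall.
  have U : uniq rs.
    rewrite map_inj_uniq ?iota_uniq // => a b H.
    have : (a.+2)%:R = (b.+2)%:R :> R.
      apply: invr_inj; apply: (mulfI (negbT (gt_eqF e0))); exact: H.
    by move/eqP; rewrite eqr_nat => /eqP [].
  have := max_poly_roots P0 Hall U.
  by rewrite size_map size_iota ltnn.
case/allPn => r /mapP [k _ ->] nr.
exists (e / (k.+2)%:R).
  rewrite divr_gt0 //= ltr_pdivrMr // ltr_pMr // ltr1n //.
by rewrite Minf_lin -Npoly_eval.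
Qed.

End Dense.


Section Final.
Variables (R : realType) (m : nat) (dX : 'I_m -> 'I_m -> R).

Lemma metric_Dp n (D : 'I_n -> 'I_n -> R) s : is_metric D -> 0 <= s -> is_metric (Dp D s).
Proof.
case=> m1 m2 m3 m4 s0; rewrite /Dp /Emx; split.
- by move=> x y; apply: addr_ge0 => //; apply: mulr_ge0 => //; exact: ler0n.
- move=> x y; split; last by move=> ->; rewrite eqxx (proj2 (m2 y y) erefl) mulr0 addr0.
  move/eqP; rewrite paddr_eq0 //; last by apply: mulr_ge0 => //; exact: ler0n.
  by case/andP => /eqP /m2.
- by move=> x y; rewrite m3 eq_sym.
- move=> x y z.
  have E : (x != z)%:R <= (x != y)%:R + (y != z)%:R :> R.
    have [xz|xz] := eqVneq x z.
      by rewrite /= addr_ge0 ?ler0n.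
    have [xy|xy] := eqVneq x y.
      have yz : y != z by rewrite -xy.
      by rewrite yz /= add0r.
    by rewrite /= lerDl ler0n.
  have := m4 x y z; have : s * (x != z)%:R <= s * ((x != y)%:R + (y != z)%:R) by exact: ler_wpM2l.
  lra.
Qed.

Lemma metric_pull n1 n2 (D2 : 'I_n2 -> 'I_n2 -> R) (h : 'I_n1 -> 'I_n2) :
  injective h -> is_metric D2 -> is_metric (fun y y' => D2 (h y) (h y')).
Proof.
move=> ih [m1 m2 m3 m4]; split => //.
move=> x y; split; first by move/m2; exact: ih.
by move=> ->; apply/m2.
Qed.

Lemma LML_transfer n1 n2 (f1 : 'I_n1 -> 'I_m) (f2 : 'I_n2 -> 'I_m)
  (D1 : 'I_n1 -> 'I_n1 -> R) (D2 : 'I_n2 -> 'I_n2 -> R) (h : 'I_n1 -> 'I_n2) (k : 'I_m -> 'I_m) :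
  bijective h -> (forall x x', dX (k x) (k x') = dX x x') ->
  (forall y, f2 (h y) = k (f1 y)) -> (forall y y', D2 (h y) (h y') = D1 y y') ->
  (forall i j, D2 i j = D2 j i) -> (forall a b, dX a b = dX b a) ->
  line_mag_limit dX (LineRep f1 D1) -> line_mag_limit dX (LineRep f2 D2).
Proof.
move=> bh iso Hf HD s2 sX [L1 L2].
have T : forall t, (has_weighting (simZ (line_dist dX (p := LineRep f1 D1) t)) <->
     has_weighting (simZ (line_dist dX (p := LineRep f2 D2) t))) /\
   magnitude (simZ (line_dist dX (p := LineRep f1 D1) t)) = magnitude (simZ (line_dist dX (p := LineRep f2 D2) t)).
  move=> t; apply: (mag_transfer bh).
    by move=> y y'; rewrite !mxE /line_dist /= HD !Hf iso.
  by move=> i j; rewrite !mxE /line_dist /= s2 sX.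
split.
  by apply: filterS L1 => t /(proj1 (T t)).1.
have -> : (fun t => magnitude (simZ (line_dist dX (p := LineRep f2 D2) t))) =
          (fun t => magnitude (simZ (line_dist dX (p := LineRep f1 D1) t))).
  by apply/funext => t; rewrite (proj2 (T t)).
exact: L2.
Qed.

Definition Sgood (p : line_rep R m) : Prop :=
  valid_rep p /\ exists2 e : R, 0 < e & forall D' : 'I_(lr_n p) -> 'I_(lr_n p) -> R,
    is_metric D' -> (forall i j, `|D' i j - @lr_D _ _ p i j| < e) -> line_mag_limit dX (LineRep (@lr_f _ _ p) D').

End Final.

Theorem theorem4p1 (R : realType) (m : nat) (dX : 'I_m -> 'I_m -> R) :
  is_metric dX -> simZ dX \in unitmx ->
  exists S : line_rep R m -> Prop,
    [/\ saturated dX S, open_rep S, dense_rep dX S &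
        forall p, valid_rep p -> S p -> line_mag_limit dX p].
Proof.
move=> mX UX.
have [mX1 mX2 mX3 mX4] := mX.
have dX0 : forall b, dX b b = 0 by move=> b; apply/mX2.
exists (Sgood dX); split.
- move=> p q vp vq [h [k [bh [_ iso] Hf HD]]] [_ [e e0 H]].
  split => //; exists e => // D'' mD'' near''.
  pose D' := fun y y' => D'' (h y) (h y').
  have mD' : is_metric D' := metric_pull (bij_inj bh) mD''.
  have near' : forall i j, `|D' i j - @lr_D _ _ p i j| < e.
    by move=> i j; rewrite /D' -HD; exact: near''.
  have s2 : forall i j, D'' i j = D'' j i by case: mD''.
  exact: (LML_transfer bh iso Hf (fun y y' => erefl) s2 mX3 (H D' mD' near')).
- move=> n f D bf mD [vp [e e0 H]].
  exists (e / 2); first by rewrite divr_gt0.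
  move=> D' mD' near'; split; first by split.
  exists (e / 2); first by rewrite divr_gt0.
  move=> D'' mD'' near''; apply: H => // i j /=.
  have := near' i j; have := near'' i j; have := ler_distD (D' i j) (D'' i j) (D i j).
  rewrite /=; lra.
- move=> W satW openW [[n f D] [[bf mD] Wp]].
  have [e1 e10 HW] := openW n f D bf mD Wp.
  have [g fg] : exists g : 'I_m -> 'I_n, forall b, f (g b) = b.
    by exists (fun b => proj1_sig (cid (bf.2 b))) => b; exact: (proj2_sig (cid (bf.2 b))).
  have [s /andP [s0 se] ds] := exists_small fg dX0 UX D e10.
  have mDs : is_metric (Dp D s) := metric_Dp mD (ltW s0).
  exists (LineRep f (Dp D s)); split.
  + by split.
  + apply: HW => // i j.
    have -> : Dp D s i j - D i j = s * (i != j)%:R by rewrite /Dp /Emx; ring.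
    case: (i != j); rewrite /= ?mulr1 ?mulr0 ?normr0 ?gtr0_norm //.
  + split; first by split.
    have [e2 e20 He2] := det_open ds.
    exists e2 => // D' mD' near'; apply: (limit_of_det fg UX); exact: He2.
- move=> [n f D] vp [_ [e e0 H]].
  by apply: H => [|i j]; [case: vp | rewrite /= subrr normr0].
Qed.
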